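(* On $\mathbb{R}^3$ with coordinates $(x,y,z)$ (the isometry group $E(1,1)$ of the flat Lorentzian plane, with its left-invariant structure), consider the Lorentzian metric $$g_1 = -dz^2 + (e^z dx + e^{-z} dy)^2 + (e^z dx - e^{-z} dy)^2 .$$ Let $F_1 = \tfrac12\big(e^{-z}\partial_x + e^{z}\partial_y\big)$, $F_2 = \tfrac12\big(e^{-z}\partial_x - e^{z}\partial_y\big)$, $F_3 = \partial_z$. For arbitrary real constants $a,b,c$ let $$X = 4a\Big(x e^z F_1 + x e^z F_2 - \tfrac12 F_3\Big) + 4(1-a)\Big(y e^{-z} F_1 - y e^{-z} F_2 + \tfrac12 F_3\Big) + b\,(e^z F_1 + e^z F_2) + c\,(e^{-z} F_1 - e^{-z} F_2).$$ Then $$2\,\mathrm{Ric}[g_1] + L_X g_1 - 4\,g_1 = 0 ,$$ and, for every choice of $a,b,c$, there is no smooth function $f$ on $\mathbb{R}^3$ with $X = \nabla f$ (gradient with respect to $g_1$). Hence $g_1$ is a shrinking non-gradient Lorentzian Ricci soliton.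
   Context: For a pseudo-Riemannian metric $g$ on a manifold $M$, a vector field $X$ and a constant $\alpha$, $(M,g,X,\alpha)$ is a Ricci soliton structure if $2\,\mathrm{Ric}[g] + L_X g + \alpha g = 0$, where $L_X$ denotes the Lie derivative. The soliton is called shrinking, steady, or expanding according as $\alpha<0$, $\alpha=0$, or $\alpha>0$. It is called gradient if $X=\nabla f$ for some function $f$, and non-gradient if $X\neq \nabla f$ for every function $f$. *)

(* Defs.v *)
From Stdlib Require Import Reals Lra ClassicalEpsilon.
Open Scope R_scope.

(* Points of R^3 with coordinates (x,y,z) = (coord 0, coord 1, coord 2). *)
Definition pt : Type := (R * R * R)%type.

Definition coord (i : nat) (p : pt) : R :=
  match i with
  | O => fst (fst p)
  | S O => snd (fst p)
  | _ => snd p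
  end.

Definition upd (i : nat) (p : pt) (t : R) : pt :=
  match i with
  | O => (t, snd (fst p), snd p)
  | S O => (fst (fst p), t, snd p)
  | _ => (fst p, t)
  end.

(* Partial derivative d/dx^i of a scalar field (the derivative when it exists;
   all fields below to which it is applied are smooth). *)
Definition pd (i : nat) (f : pt -> R) (p : pt) : R :=
  epsilon (inhabits 0)
    (fun l => derivable_pt_lim (fun t => f (upd i p t)) (coord i p) l).

Definition sum3 (F : nat -> R) : R := F 0%nat + F 1%nat + F 2%nat.

Definition cont3 (h : pt -> R) : Prop :=
  forall p eps, 0 < eps -> exists del, 0 < del /\
    forall q, Rabs (coord 0 q - coord 0 p) < del ->
              Rabs (coord 1 q - coord 1 p) < del ->
              Rabs (coord 2 q - coord 2 p) < del ->
              Rabs (h q - h p) < eps.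

Fixpoint iter_pd (l : list nat) (f : pt -> R) : pt -> R :=
  match l with
  | nil => f
  | cons i l' => pd i (iter_pd l' f)
  end.

Definition smooth (f : pt -> R) : Prop :=
  forall l : list nat,
    cont3 (iter_pd l f) /\
    forall i p, (i < 3)%nat ->
      exists d, derivable_pt_lim (fun t => iter_pd l f (upd i p t)) (coord i p) d.

Definition tensor2 : Type := nat -> nat -> pt -> R.
(* A vector field in coordinates: components X i (coefficient of d/dx^i) *)
Definition vfield : Type := nat -> pt -> R.

(* inverse matrix of a 3x3 (symmetric) matrix via cofactors, indices mod 3 *)
Definition det3 (g : tensor2) (p : pt) : R :=
  g 0%nat 0%nat p * (g 1%nat 1%nat p * g 2%nat 2%nat p - g 1%nat 2%nat p * g 2%nat 1%nat p)
  - g 0%nat 1%nat p * (g 1%nat 0%nat p * g 2%nat 2%nat p - g 1%nat 2%nat p * g 2%nat 0%nat p)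
  + g 0%nat 2%nat p * (g 1%nat 0%nat p * g 2%nat 1%nat p - g 1%nat 1%nat p * g 2%nat 0%nat p).

Definition ginv (g : tensor2) (i j : nat) (p : pt) : R :=
  let j1 := Nat.modulo (j + 1) 3 in let j2 := Nat.modulo (j + 2) 3 in
  let i1 := Nat.modulo (i + 1) 3 in let i2 := Nat.modulo (i + 2) 3 in
  (g j1 i1 p * g j2 i2 p - g j1 i2 p * g j2 i1 p) / det3 g p.

Definition Gamma (g : tensor2) (k i j : nat) (p : pt) : R :=
  / 2 * sum3 (fun l => ginv g k l p *
     (pd i (g j l) p + pd j (g i l) p - pd l (g i j) p)).

Definition Ric (g : tensor2) (i j : nat) (p : pt) : R :=
  sum3 (fun k => pd k (Gamma g k i j) p - pd j (Gamma g k i k) p)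
  + sum3 (fun k => sum3 (fun l =>
       Gamma g k k l p * Gamma g l i j p - Gamma g k j l p * Gamma g l i k p)).

Definition LieD (X : vfield) (g : tensor2) (i j : nat) (p : pt) : R :=
  sum3 (fun k => X k p * pd k (g i j) p
                 + g k j p * pd i (X k) p + g i k p * pd j (X k) p).

Definition grad (g : tensor2) (f : pt -> R) (i : nat) (p : pt) : R :=
  sum3 (fun j => ginv g i j p * pd j f p).

(* The metric g1 = -dz^2 + (e^z dx + e^-z dy)^2 + (e^z dx - e^-z dy)^2 *)
Definition th1 (i : nat) (p : pt) : R :=
  match i with O => exp (coord 2 p) | S O => exp (- coord 2 p) | _ => 0 end.
Definition th2 (i : nat) (p : pt) : R :=
  match i with O => exp (coord 2 p) | S O => - exp (- coord 2 p) | _ => 0 end.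
Definition th3 (i : nat) (p : pt) : R :=
  match i with O => 0 | S O => 0 | _ => 1 end.

Definition g1 : tensor2 := fun i j p =>
  - (th3 i p * th3 j p) + th1 i p * th1 j p + th2 i p * th2 j p.

Definition F1 : vfield := fun i p =>
  match i with O => / 2 * exp (- coord 2 p) | S O => / 2 * exp (coord 2 p) | _ => 0 end.
Definition F2 : vfield := fun i p =>
  match i with O => / 2 * exp (- coord 2 p) | S O => - (/ 2 * exp (coord 2 p)) | _ => 0 end.
Definition F3 : vfield := fun i p =>
  match i with O => 0 | S O => 0 | _ => 1 end.

Definition Xsol (a b c : R) : vfield := fun i p =>
  let x := coord 0 p in let y := coord 1 p in let z := coord 2 p in
  4 * a * (x * exp z * F1 i p + x * exp z * F2 i p - / 2 * F3 i p)
  + 4 * (1 - a) * (y * exp (- z) * F1 i p - y * exp (- z) * F2 i p + / 2 * F3 i p)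
  + b * (exp z * F1 i p + exp z * F2 i p)
  + c * (exp (- z) * F1 i p - exp (- z) * F2 i p).

(* Main.v *)
Require Import Defs.
From Stdlib Require Import Reals Lra Lia ClassicalEpsilon FunctionalExtensionality.
Open Scope R_scope.

Lemma pd_eq i f p l : derivable_pt_lim (fun t => f (upd i p t)) (coord i p) l -> pd i f p = l.
Proof.
  intro H. unfold pd.
  pose proof (epsilon_spec (inhabits 0) (fun l => derivable_pt_lim (fun t => f (upd i p t)) (coord i p) l) (ex_intro _ l H)) as H'.
  eapply uniqueness_limite; eauto.
Qed.

Lemma dlim_eq f x l l' : derivable_pt_lim f x l -> l = l' -> derivable_pt_lim f x l'.
Proof. intros H ->; exact H. Qed.
Lemma Dconst (c x : R) : derivable_pt_lim (fun _ => c) x 0.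
Proof. apply (derivable_pt_lim_const c x). Qed.
Lemma Did x : derivable_pt_lim (fun t => t) x 1.
Proof. apply derivable_pt_lim_id. Qed.
Lemma Dexp x : derivable_pt_lim (fun t => exp t) x (exp x).
Proof. apply derivable_pt_lim_exp. Qed.
Lemma Dplus f g x a b : derivable_pt_lim f x a -> derivable_pt_lim g x b ->
  derivable_pt_lim (fun t => f t + g t) x (a + b).
Proof. intros. apply (derivable_pt_lim_plus f g x a b); auto. Qed.
Lemma Dminus f g x a b : derivable_pt_lim f x a -> derivable_pt_lim g x b ->
  derivable_pt_lim (fun t => f t - g t) x (a - b).
Proof. intros. apply (derivable_pt_lim_minus f g x a b); auto. Qed.
Lemma Dmul f g x a b : derivable_pt_lim f x a -> derivable_pt_lim g x b ->
  derivable_pt_lim (fun t => f t * g t) x (a * g x + f x * b).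
Proof. intros. eapply dlim_eq. apply (derivable_pt_lim_mult f g x a b); auto. ring. Qed.
Lemma Dopp f x a : derivable_pt_lim f x a -> derivable_pt_lim (fun t => - f t) x (- a).
Proof. intros. apply (derivable_pt_lim_opp f x a); auto. Qed.
Lemma Dnexp x : derivable_pt_lim (fun t => exp (- t)) x (- exp (- x)).
Proof.
  eapply dlim_eq.
  apply (derivable_pt_lim_comp (fun t => - t) exp x (-1) (exp (-x))).
  - eapply dlim_eq. apply Dopp. apply Did. ring.
  - apply derivable_pt_lim_exp.
  - ring.
Qed.

Ltac dtac := repeat (first [apply Dconst | apply Did | apply Dexp | apply Dnexp
   | apply Dplus | apply Dminus | apply Dmul | apply Dopp]).
Ltac dsolve := eapply dlim_eq; [dtac | cbv beta].

Definition dg (m i j : nat) (z : R) : R :=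
  match m, i, j with
  | S (S O), O, O => 4 * exp z * exp z
  | S (S O), S O, S O => - (4 * exp (- z) * exp (- z))
  | _, _, _ => 0 end.

Ltac cbvd := cbv beta iota delta [g1 th1 th2 th3 upd coord fst snd dg].

Lemma pd_g1 m i j p : (m < 3)%nat -> (i < 3)%nat -> (j < 3)%nat ->
  pd m (g1 i j) p = dg m i j (coord 2 p).
Proof.
  intros Hm Hi Hj. destruct p as [[x y] z]. apply pd_eq.
  destruct m as [|[|[|m]]]; try lia; destruct i as [|[|[|i]]]; try lia;
  destruct j as [|[|[|j]]]; try lia; cbvd; dsolve.
  all: ring.
Qed.

Lemma det3_val p : det3 g1 p = -4.
Proof.
  destruct p as [[x y] z]. unfold det3. cbvd.
  rewrite exp_Ropp. field. apply Rgt_not_eq, exp_pos.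
Qed.

Definition Iz (k l : nat) (z : R) : R :=
  match k, l with
  | O, O => exp (- z) * exp (- z) / 2
  | S O, S O => exp z * exp z / 2
  | S (S O), S (S O) => -1
  | _, _ => 0 end.

Lemma ginv_val k l p : (k < 3)%nat -> (l < 3)%nat -> ginv g1 k l p = Iz k l (coord 2 p).
Proof.
  intros Hk Hl. unfold ginv. rewrite det3_val. destruct p as [[x y] z].
  destruct k as [|[|[|k]]]; try lia; destruct l as [|[|[|l]]]; try lia;
  simpl Nat.modulo; cbv beta iota delta [g1 th1 th2 th3 upd coord fst snd Iz];
  rewrite ?exp_Ropp; field; apply Rgt_not_eq, exp_pos.
Qed.

Definition Gc (k i j : nat) (z : R) : R :=
  match k, i, j with
  | O, O, S (S O) => 1 | O, S (S O), O => 1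
  | S O, S O, S (S O) => -1 | S O, S (S O), S O => -1
  | S (S O), O, O => 2 * exp z * exp z
  | S (S O), S O, S O => - (2 * exp (- z) * exp (- z))
  | _, _, _ => 0 end.

Lemma Gamma_val k i j p : (k < 3)%nat -> (i < 3)%nat -> (j < 3)%nat ->
  Gamma g1 k i j p = Gc k i j (coord 2 p).
Proof.
  intros Hk Hi Hj. unfold Gamma, sum3.
  rewrite !ginv_val by lia. rewrite !pd_g1 by lia.
  destruct p as [[x y] z].
  destruct k as [|[|[|k]]]; try lia; destruct i as [|[|[|i]]]; try lia;
  destruct j as [|[|[|j]]]; try lia;
  cbv beta iota delta [upd coord fst snd Iz Gc dg];
  rewrite ?exp_Ropp; field; apply Rgt_not_eq, exp_pos.
Qed.

Definition Gc' (k i j : nat) (z : R) : R :=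
  match k, i, j with
  | S (S O), O, O => 4 * exp z * exp z
  | S (S O), S O, S O => 4 * exp (- z) * exp (- z)
  | _, _, _ => 0 end.

Definition dG (m k i j : nat) (z : R) : R :=
  match m with S (S O) => Gc' k i j z | _ => 0 end.

Lemma pd_Gamma m k i j p : (m < 3)%nat -> (k < 3)%nat -> (i < 3)%nat -> (j < 3)%nat ->
  pd m (Gamma g1 k i j) p = dG m k i j (coord 2 p).
Proof.
  intros Hm Hk Hi Hj.
  replace (Gamma g1 k i j) with (fun q => Gc k i j (coord 2 q))
    by (apply functional_extensionality; intro q; rewrite Gamma_val; auto).
  destruct p as [[x y] z]. apply pd_eq.
  destruct m as [|[|[|m]]]; try lia; destruct k as [|[|[|k]]]; try lia;
  destruct i as [|[|[|i]]]; try lia;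
  destruct j as [|[|[|j]]]; try lia;
  cbv beta iota delta [upd coord fst snd Gc Gc' dG]; dsolve; ring.
Qed.

Definition Xc (a b c : R) (k : nat) (x y : R) : R :=
  match k with O => 4 * a * x + b | S O => 4 * (1 - a) * y + c | _ => 2 - 4 * a end.

Lemma Xs_val a b c k p : (k < 3)%nat -> Xsol a b c k p = Xc a b c k (coord 0 p) (coord 1 p).
Proof.
  intros Hk. destruct p as [[x y] z]. unfold Xsol.
  destruct k as [|[|[|k]]]; try lia;
  cbv beta iota delta [upd coord fst snd Xc F1 F2 F3];
  rewrite ?exp_Ropp; field; apply Rgt_not_eq, exp_pos.
Qed.

Definition dX (a : R) (m k : nat) : R :=
  match m, k with O, O => 4 * a | S O, S O => 4 * (1 - a) | _, _ => 0 end.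

Lemma pd_X a b c m k p : (m < 3)%nat -> (k < 3)%nat -> pd m (Xsol a b c k) p = dX a m k.
Proof.
  intros Hm Hk.
  replace (Xsol a b c k) with (fun q => Xc a b c k (coord 0 q) (coord 1 q))
    by (apply functional_extensionality; intro q; rewrite Xs_val; auto).
  destruct p as [[x y] z]. apply pd_eq.
  destruct m as [|[|[|m]]]; try lia; destruct k as [|[|[|k]]]; try lia;
  cbv beta iota delta [upd coord fst snd Xc dX]; dsolve; ring.
Qed.

Lemma part1 a b c : forall (i j : nat) (p : pt), (i < 3)%nat -> (j < 3)%nat ->
       2 * Ric g1 i j p + LieD (Xsol a b c) g1 i j p - 4 * g1 i j p = 0.
Proof.
  intros i j p Hi Hj. unfold Ric, LieD, sum3.
  destruct i as [|[|[|i]]]; try lia; destruct j as [|[|[|j]]]; try lia;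
  rewrite !pd_Gamma by lia; rewrite !Gamma_val by lia; rewrite !pd_g1 by lia;
  rewrite !pd_X by lia; rewrite !Xs_val by lia;
  destruct p as [[x y] z];
  cbv beta iota delta [g1 th1 th2 th3 upd coord fst snd Gc Gc' dG dg dX Xc];
  rewrite ?exp_Ropp; field; apply Rgt_not_eq, exp_pos.
Qed.

Lemma pd_spec f i p : smooth f -> (i < 3)%nat ->
  derivable_pt_lim (fun t => f (upd i p t)) (coord i p) (pd i f p).
Proof.
  intros Hs Hi. destruct (Hs nil) as [_ H]. destruct (H i p Hi) as [d Hd].
  simpl in Hd. rewrite (pd_eq i f p d Hd). exact Hd.
Qed.

Lemma part2 a b c : ~ (exists f : pt -> R, smooth f /\
           forall (i : nat) (p : pt), (i < 3)%nat -> Xsol a b c i p = grad g1 f i p).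
Proof.
  intros [f [Hs H]].
  assert (Hg : forall i x y z, (i < 3)%nat -> Xc a b c i x y =
     Iz i 0 z * pd 0 f (x,y,z) + Iz i 1 z * pd 1 f (x,y,z) + Iz i 2 z * pd 2 f (x,y,z)).
  { intros i x y z Hi. pose proof (H i (x,y,z) Hi) as E. rewrite Xs_val in E by lia.
    unfold grad, sum3 in E. rewrite !ginv_val in E by lia. exact E. }
  assert (E := fun x y z => Hg 0%nat x y z ltac:(lia)).
  assert (E1 := fun x y z => Hg 1%nat x y z ltac:(lia)).
  assert (E2 := fun x y z => Hg 2%nat x y z ltac:(lia)).
  cbv beta iota delta [Iz Xc] in E, E1, E2.
  assert (h2 : forall x y z, pd 2 f (x,y,z) = 4 * a - 2).
  { intros. specialize (E2 x y z). lra. }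
  assert (h0 : forall x y z, pd 0 f (x,y,z) = 2 * exp z * exp z * (4 * a * x + b)).
  { intros. rewrite (E x y z). rewrite exp_Ropp. field. apply Rgt_not_eq, exp_pos. }
  assert (h1 : forall x y z, pd 1 f (x,y,z) = 2 * exp (- z) * exp (- z) * (4 * (1 - a) * y + c)).
  { intros. rewrite (E1 x y z). rewrite exp_Ropp. field. apply Rgt_not_eq, exp_pos. }
  clear E E1 E2 Hg H.
  assert (Hsh : forall x y, f (x,y,1) = f (x,y,0) + (4 * a - 2)).
  { intros x y.
    destruct (MVT_cor2 (fun t => f (x,y,t)) (fun _ => 4 * a - 2) 0 1 Rlt_0_1) as [cc [Hc _]].
    - intros cc _. pose proof (pd_spec f 2 (x,y,cc) Hs ltac:(lia)) as D.
      rewrite h2 in D. exact D.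
    - lra. }
  assert (Hx : forall x y, pd 0 f (x,y,1) = pd 0 f (x,y,0)).
  { intros x y.
    pose proof (pd_spec f 0 (x,y,1) Hs ltac:(lia)) as D1.
    pose proof (pd_spec f 0 (x,y,0) Hs ltac:(lia)) as D0.
    cbv beta iota delta [upd coord fst snd] in D1, D0.
    assert (D2 : derivable_pt_lim (fun t => f (t,y,0) + (4 * a - 2)) x (pd 0 f (x,y,0) + 0)).
    { apply Dplus. exact D0. apply Dconst. }
    replace (fun t => f (t,y,1)) with (fun t => f (t,y,0) + (4 * a - 2)) in D1
      by (apply functional_extensionality; intro t; rewrite Hsh; reflexivity).
    rewrite (uniqueness_limite _ _ _ _ D1 D2). ring. }
  assert (Hy : forall x y, pd 1 f (x,y,1) = pd 1 f (x,y,0)).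
  { intros x y.
    pose proof (pd_spec f 1 (x,y,1) Hs ltac:(lia)) as D1.
    pose proof (pd_spec f 1 (x,y,0) Hs ltac:(lia)) as D0.
    cbv beta iota delta [upd coord fst snd] in D1, D0.
    assert (D2 : derivable_pt_lim (fun t => f (x,t,0) + (4 * a - 2)) y (pd 1 f (x,y,0) + 0)).
    { apply Dplus. exact D0. apply Dconst. }
    replace (fun t => f (x,t,1)) with (fun t => f (x,t,0) + (4 * a - 2)) in D1
      by (apply functional_extensionality; intro t; rewrite Hsh; reflexivity).
    rewrite (uniqueness_limite _ _ _ _ D1 D2). ring. }
  assert (e1 : 1 < exp 1) by (pose proof (exp_increasing 0 1 ltac:(lra)) as Q; rewrite exp_0 in Q; exact Q).
  assert (e2 : exp (Ropp 1) < 1) by (pose proof (exp_increasing (Ropp 1) 0 ltac:(lra)) as Q; rewrite exp_0 in Q; exact Q).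
  assert (e3 : 0 < exp (Ropp 1)) by apply exp_pos.
  assert (Lx : forall x, 4 * a * x + b = 0).
  { intro x. pose proof (Hx x 0) as K. rewrite !h0 in K. rewrite exp_0 in K.
    assert (K' : (exp 1 * exp 1 - 1) * (4 * a * x + b) = 0).
    { replace ((exp 1 * exp 1 - 1) * (4 * a * x + b)) with ((2 * exp 1 * exp 1 * (4 * a * x + b) - 2 * 1 * 1 * (4 * a * x + b)) / 2) by field. rewrite K. field. }
    apply Rmult_integral in K' as [K'|K']; [nra | exact K']. }
  assert (Ly : forall y, 4 * (1 - a) * y + c = 0).
  { intro y. pose proof (Hy 0 y) as K. rewrite !h1 in K. rewrite Ropp_0, exp_0 in K.
    assert (K' : (exp (Ropp 1) * exp (Ropp 1) - 1) * (4 * (1 - a) * y + c) = 0).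
    { replace ((exp (Ropp 1) * exp (Ropp 1) - 1) * (4 * (1 - a) * y + c)) with ((2 * exp (Ropp 1) * exp (Ropp 1) * (4 * (1 - a) * y + c) - 2 * 1 * 1 * (4 * (1 - a) * y + c)) / 2) by field. rewrite K. field. }
    apply Rmult_integral in K' as [K'|K']; [nra | exact K']. }
  pose proof (Lx 0). pose proof (Lx 1). pose proof (Ly 0). pose proof (Ly 1). lra.
Qed.

Theorem theorem5p1 :
  forall a b c : R,
    (forall (i j : nat) (p : pt), (i < 3)%nat -> (j < 3)%nat ->
       2 * Ric g1 i j p + LieD (Xsol a b c) g1 i j p - 4 * g1 i j p = 0)
    /\ ~ (exists f : pt -> R, smooth f /\
           forall (i : nat) (p : pt), (i < 3)%nat -> Xsol a b c i p = grad g1 f i p).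
Proof. intros a b c. split; [apply part1 | apply part2]. Qed.
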